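(* Let $n\equiv 3\pmod 4$ with $n>3$. Let $1\le r\le m$, let $M_r\in\mathfrak{C}_r$, and suppose $\det\tilde M_r>0$. Then the set of elements $E_m\in\mathfrak{E}_m$ with $\det\tilde E_m>0$ is non-empty.
   Context: Fix an integer $n\equiv 3\pmod 4$, $n>3$. For $m\ge1$, $\mathfrak{C}_m$ is the set of symmetric positive definite $m\times m$ integer matrices $C=(c_{ij})$ with $c_{ii}=n$ and $c_{ij}\equiv n\pmod 4$ for all $i,j$. Given a fixed $M_r\in\mathfrak{C}_r$, for $m\ge r$, $\mathfrak{E}_m$ is the set of $E_m\in\mathfrak{C}_m$ whose leading $r\times r$ submatrix is $M_r$. For a square matrix $C$ of order $m$, $\tilde C$ denotes the matrix obtained from $C$ by replacing its $(m,m)$ entry by $3$. *)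

(* Defs.v *)
From HB Require Import structures.
From mathcomp Require Import all_boot all_order all_algebra.
From mathcomp Require Import Rstruct.
Set Implicit Arguments. Unset Strict Implicit. Unset Printing Implicit Defensive.
Import Order.TTheory GRing.Theory Num.Theory.
Local Open Scope ring_scope.

Definition symmetric_int (m : nat) (C : 'M[int]_m) : Prop := C^T = C.

Definition posdef_int (m : nat) (C : 'M[int]_m) : Prop :=
  forall x : 'cV[Rdefinitions.R]_m, x != 0 ->
    0 < (x^T *m map_mx (fun z : int => z%:~R) C *m x) 0 0.

Definition in_frakC (n m : nat) (C : 'M[int]_m) : Prop :=
  [/\ symmetric_int C, posdef_int C,
      (forall i : 'I_m, C i i = n%:Z) &
      (forall i j : 'I_m, (C i j = n%:Z %[mod 4])%Z)].

Definition in_frakE (n r m : nat) (Hrm : (r <= m)%N) (M : 'M[int]_r)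
    (E : 'M[int]_m) : Prop :=
  in_frakC n E /\
  (forall i j : 'I_r, E (widen_ord Hrm i) (widen_ord Hrm j) = M i j).

Definition tilde (m : nat) (C : 'M[int]_m) : 'M[int]_m :=
  \matrix_(i, j) if ((i : nat) == m.-1) && ((j : nat) == m.-1) then 3 else C i j.

(* Main.v *)
Require Import Defs.
From HB Require Import structures.
From mathcomp Require Import all_boot all_order all_algebra.
From mathcomp Require Import Rstruct.
From mathcomp Require Import ring lra zify.
Set Implicit Arguments. Unset Strict Implicit. Unset Printing Implicit Defensive.
Import Order.TTheory GRing.Theory Num.Theory.
Local Open Scope ring_scope.

Definition lead {T : Type} p (B : 'M[T]_p.+1) : 'M[T]_p := row' ord_max (col' ord_max B).

Section QF.
Variable R : realFieldType.
Definition qf n (B : 'M[R]_n) (x : 'cV[R]_n) : R := (x^T *m B *m x) 0 0.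
Definition pd n (B : 'M[R]_n) := forall x : 'cV[R]_n, x != 0 -> 0 < qf B x.
Definition lastc p (B : 'M[R]_p.+1) : 'cV[R]_p := \col_i B (lift ord_max i) ord_max.
Definition ext p (y : 'cV[R]_p) (t : R) : 'cV[R]_p.+1 :=
  \col_i (if unlift ord_max i is Some j then y j 0 else t).

Lemma liftW p (i : 'I_p) : lift ord_max i = widen_ord (leqnSn p) i.
Proof. apply: val_inj; exact: lift_max. Qed.

Lemma ext_lift p (y : 'cV[R]_p) t i : ext y t (lift ord_max i) 0 = y i 0.
Proof. by rewrite mxE liftK. Qed.
Lemma ext_max p (y : 'cV[R]_p) t : ext y t ord_max 0 = t.
Proof. by rewrite mxE unlift_none. Qed.

Lemma ext_surj p (x : 'cV[R]_p.+1) :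
  x = ext (\col_j x (lift ord_max j) 0) (x ord_max 0).
Proof.
apply/colP => i; rewrite mxE; case: unliftP => [j ->|->] //.
by rewrite mxE.
Qed.

Lemma qfE n (B : 'M[R]_n) x : qf B x = \sum_i \sum_j x i 0 * B i j * x j 0.
Proof.
rewrite /qf mxE exchange_big /=; apply: eq_bigr => j _.
rewrite mxE big_distrl /=; apply: eq_bigr => i _; by rewrite !mxE.
Qed.

Lemma QE p (B : 'M[R]_p.+1) y t : B^T = B ->
  qf B (ext y t) = qf (lead B) y + 2 * t * (y^T *m lastc B) 0 0
                   + t ^+ 2 * B ord_max ord_max.
Proof.
move=> sB.
have sBij i j : B i j = B j i by rewrite -{1}sB mxE.
rewrite !qfE big_ord_recr /=.
have -> : \sum_(i < p) \sum_(j < p.+1) ext y t (widen_ord (leqnSn p) i) 0 *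
   B (widen_ord (leqnSn p) i) j * ext y t j 0 =
   \sum_(i < p) \sum_(j < p) y i 0 * lead B i j * y j 0 +
   \sum_(i < p) y i 0 * B (lift ord_max i) ord_max * t.
  rewrite -big_split /=; apply: eq_bigr => i _.
  rewrite big_ord_recr /=; congr (_ + _).
    apply: eq_bigr => j _; by rewrite -!liftW !ext_lift !mxE.
  by rewrite -liftW ext_lift ext_max.
rewrite big_ord_recr /= !ext_max.
have -> : \sum_(i < p) t * B ord_max (widen_ord (leqnSn p) i) *
      ext y t (widen_ord (leqnSn p) i) 0 = \sum_(i < p) y i 0 * B (lift ord_max i) ord_max * t.
  by apply: eq_bigr => i _; rewrite -liftW ext_lift sBij; ring.
have -> : \sum_(i < p) y i 0 * B (lift ord_max i) ord_max * t =
   t * (y^T *m lastc B) 0 0.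
  rewrite mxE mulr_sumr; apply: eq_bigr => i _; rewrite !mxE; ring.
ring.
Qed.

Lemma eD m n (A B : 'M[R]_(m,n)) i j : (A + B) i j = A i j + B i j.
Proof. by rewrite mxE. Qed.
Lemma eZ m n a (A : 'M[R]_(m,n)) i j : (a *: A) i j = a * A i j.
Proof. by rewrite mxE. Qed.
Lemma eT (A : 'M[R]_1) : A^T 0 0 = A 0 0.
Proof. by rewrite mxE. Qed.

Lemma qfD n (A : 'M[R]_n) x w s : A^T = A ->
  qf A (x + s *: w) = qf A x + 2 * s * (x^T *m A *m w) 0 0 + s ^+ 2 * qf A w.
Proof.
move=> sA; rewrite /qf.
have -> : (x + s *: w)^T = x^T + s *: w^T by rewrite linearD linearZ.
rewrite mulmxDl mulmxDl mulmxDr mulmxDr.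
rewrite -!scalemxAl -!scalemxAr !eD !eZ.
have -> : (w^T *m A *m x) 0 0 = (x^T *m A *m w) 0 0.
  by rewrite -eT !trmx_mul trmxK sA mulmxA.
ring.
Qed.

Lemma lead_sym p (B : 'M[R]_p.+1) : B^T = B -> (lead B)^T = lead B.
Proof. move=> sB; apply/matrixP => i j; rewrite !mxE; by rewrite -{1}sB mxE. Qed.

Lemma schurQ p (B : 'M[R]_p.+1) y t : B^T = B -> lead B \in unitmx ->
  qf B (ext y t) = qf (lead B) (y + t *: (invmx (lead B) *m lastc B))
     + (B ord_max ord_max - ((lastc B)^T *m (invmx (lead B) *m lastc B)) 0 0) * t ^+ 2.
Proof.
move=> sB uA; rewrite QE // qfD ?lead_sym //.
set A := lead B; set u := lastc B; set z := invmx A *m u.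
have Az : A *m z = u by rewrite /z mulKVmx.
rewrite /qf -!mulmxA Az.
have -> : (u^T *m z) 0 0 = (z^T *m u) 0 0 by rewrite -eT trmx_mul trmxK.
ring.
Qed.

Lemma liftNmax p (i : 'I_p) : (lift ord_max i == ord_max) = false.
Proof. by apply/negbTE; rewrite eq_sym neq_lift. Qed.

Lemma schurD p (B : 'M[R]_p.+1) : B^T = B -> lead B \in unitmx ->
  \det B = \det (lead B) *
    (B ord_max ord_max - ((lastc B)^T *m (invmx (lead B) *m lastc B)) 0 0).
Proof.
move=> sB uA.
have sBij i j : B i j = B j i by rewrite -{1}sB mxE.
set A := lead B; set u := lastc B; set z := invmx A *m u.
set s := (B ord_max ord_max - _).
have Az : A *m z = u by rewrite /z mulKVmx.
pose C := \matrix_(i, j) if j == ord_max then (if i == ord_max then s else 0)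
                      else B i j.
pose L := \matrix_(i, j) ((i == j)%:R + (if j == ord_max then
        (if unlift ord_max i is Some k then z k 0 else 0) else 0)) : 'M[R]_p.+1.
have BCL : B = C *m L.
  apply/matrixP => i j; rewrite !mxE.
  case: (unliftP ord_max j) => [j' ->|->].
    rewrite (bigD1 (lift ord_max j')) //= big1 => [|k kj].
      by rewrite /C /L !mxE eqxx liftNmax /= !addr0 mulr1.
    by rewrite /C /L !mxE liftNmax (negbTE kj) addr0 mulr0.
  rewrite big_ord_recr /= /C /L !mxE eqxx unlift_none /= !addr0 mulr1.
  under eq_bigr => k _ do rewrite !mxE -liftW liftK !liftNmax /= add0r.
  case: (unliftP ord_max i) => [i' ->|->].
    rewrite liftNmax addr0.
    have := congr1 (fun M : 'cV[R]_p => M (i' : 'I_p) 0) Az; rewrite !mxE => <-.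
    by apply: eq_bigr => k _; rewrite eqxx /A !mxE.
  rewrite !eqxx /s mxE.
  have -> : \sum_j0 (u^T) 0 j0 * z j0 0 = \sum_k B ord_max (lift ord_max k) * z k 0.
    by apply: eq_bigr => k _; rewrite !mxE sBij.
  by rewrite addrC subrK.
have dL : \det L = 1.
  rewrite -det_tr det_trig.
    apply: big1 => i _; rewrite !mxE eqxx.
    case: (unliftP ord_max i) => [i' ->|->]; first by rewrite liftNmax addr0.
    by rewrite eqxx /= !addr0.
  apply/is_trig_mxP => i j ij; rewrite !mxE.
  have -> : (j == i) = false by apply/negbTE; rewrite neq_ltn ij orbT.
  have -> : (i == ord_max) = false.
    by apply/negbTE; rewrite neq_ltn (leq_trans ij) // -ltnS.
  by rewrite addr0.
have dC : \det C = s * \det A.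
  rewrite (expand_det_col _ ord_max) big_ord_recr /= big1 => [|k _].
    rewrite add0r !mxE !eqxx /cofactor.
    rewrite -signr_odd addnn odd_double expr0 mul1r; congr (_ * \det _).
    by apply/matrixP => a b; rewrite !mxE liftNmax.
  by rewrite !mxE eqxx -liftW liftNmax mul0r.
by rewrite {1}BCL det_mulmx dL dC mulr1 mulrC.
Qed.

Lemma qf0 n (A : 'M[R]_n) : qf A 0 = 0.
Proof. by rewrite /qf mulmx0 mxE. Qed.

Lemma psd n (A : 'M[R]_n) v : pd A -> 0 <= qf A v.
Proof.
move=> hA; have [->|nz] := eqVneq v 0; first by rewrite qf0.
exact/ltW/hA.
Qed.

Lemma ext0 p : ext (0 : 'cV[R]_p) 0 = 0.
Proof. by apply/colP => i; rewrite !mxE; case: unliftP => [j _|_]; rewrite ?mxE. Qed.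

Lemma ext_neq0t p (y : 'cV[R]_p) t : t != 0 -> ext y t != 0.
Proof.
move=> nt; apply/eqP => e; move/eqP: nt; apply.
by have := congr1 (fun M : 'cV[R]_p.+1 => M ord_max 0) e; rewrite ext_max mxE.
Qed.

Lemma ext_neq0y p (y : 'cV[R]_p) t : y != 0 -> ext y t != 0.
Proof.
move=> ny; apply/eqP => e; move/eqP: ny; apply; apply/colP => i.
by have := congr1 (fun M : 'cV[R]_p.+1 => M (lift ord_max i) 0) e; rewrite ext_lift !mxE.
Qed.

Lemma pd_lead p (B : 'M[R]_p.+1) : B^T = B -> pd B -> pd (lead B).
Proof.
move=> sB hB y ny; have := hB _ (ext_neq0y 0 ny).
by rewrite QE // !mulr0 mul0r expr0n /= mul0r !addr0.
Qed.

Lemma pd_det p (B : 'M[R]_p) : B^T = B -> pd B -> 0 < \det B.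
Proof.
elim: p B => [|p IH] B sB hB; first by rewrite det_mx00 ltr01.
have dA : 0 < \det (lead B) by apply: IH; [exact: lead_sym | exact: pd_lead].
have uA : lead B \in unitmx by rewrite unitmxE unitfE lt0r_neq0.
rewrite schurD //; apply: mulr_gt0 => //.
have := hB _ (ext_neq0t (- (invmx (lead B) *m lastc B)) (oner_neq0 R)).
by rewrite schurQ // scale1r addNr qf0 add0r expr1n mulr1.
Qed.

Lemma pd_of_lead p (B : 'M[R]_p.+1) : B^T = B -> pd (lead B) -> 0 < \det B -> pd B.
Proof.
move=> sB hA dB.
have dA : 0 < \det (lead B) by apply: pd_det => //; exact: lead_sym.
have uA : lead B \in unitmx by rewrite unitmxE unitfE lt0r_neq0.
move: dB; rewrite schurD // pmulr_rgt0 // => hs.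
move=> x nx; rewrite (ext_surj x) schurQ //.
set y := \col_j x (lift ord_max j) 0; set t := x ord_max 0.
have [t0|nt] := eqVneq t 0.
  rewrite t0 scale0r addr0 expr0n /= mulr0 addr0; apply: hA.
  apply/eqP => y0; move/eqP: nx; apply; rewrite (ext_surj x) -/y -/t y0 t0.
  exact: ext0.
apply: ltr_wpDl; first exact: psd.
by apply: mulr_gt0 => //; rewrite exprn_even_gt0 // nt orbT.
Qed.
End QF.

Section Int.
Variables (n p : nat) (M : 'M[int]_p.+1).

Definition Gf (x y : nat) : int :=
  if x == y then n%:Z else if (p <= x)%N && (p <= y)%N then 3
  else M (inord (minn x p)) (inord (minn y p)).

Definition G k : 'M[int]_k := \matrix_(i, j) Gf i j.

Lemma GE k (i j : 'I_k) : G k i j = Gf i j.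
Proof. by rewrite mxE. Qed.

Lemma Gf_bump k x y : (p <= k)%N -> (x <= k)%N -> (y <= k)%N ->
  Gf (bump k x) (bump k y) = Gf x y.
Proof.
move=> pk xk yk; rewrite /Gf (inj_eq (can_inj (bumpK k))).
have hb z : (z <= k)%N -> ((p <= bump k z) = (p <= z))%N /\ minn (bump k z) p = minn z p.
  move=> zk; rewrite /bump; case: (leqP k z) => h /=; last by rewrite add0n.
  have -> : z = k by apply/eqP; rewrite eqn_leq zk h.
  split; [lia | lia].
by have [-> ->] := hb _ xk; have [-> ->] := hb _ yk.
Qed.


Lemma Gf_lo (hd : forall i, M i i = n%:Z) (x y : nat) : (x < p.+1)%N -> (y < p.+1)%N ->
  Gf x y = M (inord x) (inord y).
Proof.
move=> hx hy; rewrite /Gf; case: eqP => [<-|ne]; first by rewrite hd.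
have -> : ((p <= x) && (p <= y))%N = false.
  by apply/negbTE/negP => /andP [a b]; apply: ne; lia.
have -> : minn x p = x by lia.
by have -> : minn y p = y by lia.
Qed.
Lemma Gf_sym (hs : M^T = M) x y : Gf x y = Gf y x.
Proof.
rewrite /Gf; case: (x =P y) => [<-|/eqP ne]; first by rewrite eqxx.
rewrite eq_sym (negbTE ne) andbC; case: ifP => // _.
by rewrite -{1}hs mxE.
Qed.

Lemma Gf_diag x : Gf x x = n%:Z.
Proof. by rewrite /Gf eqxx. Qed.

Lemma Gf_mod (hm : forall i j, (M i j = n%:Z %[mod 4])%Z) (h4 : (n %% 4 = 3)%N) x y :
  (Gf x y = n%:Z %[mod 4])%Z.
Proof.
rewrite /Gf; case: eqP => _ //; case: ifP => _ //.
by rewrite (modz_nat n 4) h4.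
Qed.

Lemma lead_G k : lead (G k.+1) = G k.
Proof. by apply/matrixP => i j; rewrite !mxE !lift_max. Qed.

Lemma lead_tG k : lead (tilde (G k.+1)) = G k.
Proof.
apply/matrixP => i j; rewrite !mxE !lift_max /=.
by have -> : ((i : nat) == k) = false by apply/negbTE; rewrite neq_ltn ltn_ord.
Qed.

Lemma liftN m (h : 'I_m) i : (lift h i == h) = false.
Proof. by apply/negbTE; rewrite eq_sym neq_lift. Qed.

Lemma tGE m i j : tilde (G m) i j =
  if ((i : nat) == m.-1) && ((j : nat) == m.-1) then 3 else Gf i j.
Proof. by rewrite !mxE. Qed.

Lemma det_G_tG k : \det (G k.+1) = \det (tilde (G k.+1)) + (n%:Z - 3) * \det (G k).
Proof.
rewrite (expand_det_row (G k.+1) ord_max) (expand_det_row (tilde (G k.+1)) ord_max).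
have cof j : cofactor (G k.+1) ord_max j = cofactor (tilde (G k.+1)) ord_max j.
  rewrite /cofactor; congr (_ * \det _); apply/matrixP => a b.
  by rewrite !mxE lift_max /= (ltn_eqF (ltn_ord a)).
rewrite !big_ord_recr /=.
have -> : \sum_(i < k) G k.+1 ord_max (widen_ord (leqnSn k) i) *
    cofactor (G k.+1) ord_max (widen_ord (leqnSn k) i) =
  \sum_(i < k) tilde (G k.+1) ord_max (widen_ord (leqnSn k) i) *
    cofactor (tilde (G k.+1)) ord_max (widen_ord (leqnSn k) i).
  apply: eq_bigr => j _; rewrite cof tGE GE /=.
  by rewrite (ltn_eqF (ltn_ord j)) andbF.
rewrite -cof tGE GE /= eqxx Gf_diag.
have -> : cofactor (G k.+1) ord_max ord_max = \det (G k).
  rewrite /cofactor -signr_odd addnn odd_double expr0 mul1r.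
  exact: (congr1 determinant (lead_G k)).
rewrite /=; ring.
Qed.

Lemma Gf_step k j : (p <= k)%N -> (j < k)%N -> Gf k j = Gf k.+1 j.
Proof.
move=> pk jk; rewrite /Gf.
have -> : (k == j) = false by apply/negbTE; lia.
have -> : (k.+1 == j) = false by apply/negbTE; lia.
rewrite pk (leqW pk) /=.
have -> : minn k p = p by lia.
by have -> : minn k.+1 p = p by lia.
Qed.

Lemma det_tG_step k : (p <= k)%N ->
  \det (tilde (G k.+2)) = (n%:Z - 3) * \det (tilde (G k.+1)).
Proof.
move=> pk.
set T := tilde (G k.+2).
pose a : 'I_k.+2 := inord k.
have va : (a : nat) = k by rewrite inordK.
pose Bm := \matrix_(i, j) if i == a then (if j == a then (n%:Z - 3) else 0) else T i j.
pose Cm := \matrix_(i, j) if i == a then T ord_max j else T i j.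
have h1 : row a T = 1 *: row a Bm + 1 *: row a Cm.
  apply/rowP => j; rewrite !mxE eqxx !mul1r /= va.
  have -> : (k == k.+1) = false by lia.
  rewrite eqxx /=.
  have [hj|hj|hj] := ltngtP j k.
  - have -> : (j == a) = false by apply/negbTE; rewrite -val_eqE /= va; lia.
    have -> : ((j : nat) == k.+1) = false by lia.
    by rewrite add0r Gf_step.
  - have hj' : (j : nat) = k.+1 by have := ltn_ord j; lia.
    have -> : (j == a) = false by apply/negbTE; rewrite -val_eqE /= va; lia.
    rewrite hj' eqxx add0r /Gf.
    have -> : (k == k.+1) = false by lia.
    by rewrite pk (leqW pk).
  - have -> : (j == a) by rewrite -val_eqE /= va hj.
    have -> : ((j : nat) == k.+1) = false by lia.
    rewrite hj Gf_diag /Gf.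
    have -> : (k.+1 == k) = false by lia.
    rewrite pk (leqW pk) /=; ring.
have h2 : row' a Bm = row' a T.
  by apply/matrixP => i j; rewrite !mxE liftN.
have h3 : row' a Cm = row' a T.
  by apply/matrixP => i j; rewrite !mxE liftN.
rewrite (determinant_multilinear h1 h2 h3).
have -> : \det Cm = 0.
  apply: (@determinant_alternate _ _ _ a ord_max).
    by rewrite -val_eqE /= va /=; lia.
  move=> j; rewrite !mxE eqxx.
  by have -> : (ord_max == a) = false by apply/negbTE; rewrite -val_eqE /= va /=; lia.
rewrite mulr0 addr0 mul1r (expand_det_row Bm a) (bigD1 a) //= big1 => [|j ja].
  rewrite addr0 !mxE !eqxx /cofactor -signr_odd addnn odd_double expr0 mul1r.
  congr (_ * \det _); apply/matrixP => i j; rewrite !mxE !liftN /= va.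
  have bk (x : 'I_k.+1) : (bump k x == k.+1) = ((x : nat) == k).
    by rewrite /bump; have := ltn_ord x; case: (leqP k x) => h; lia.
  rewrite !bk Gf_bump //; by rewrite -ltnS.
by rewrite !mxE eqxx (negbTE ja) mul0r.
Qed.
End Int.

Definition toR k (C : 'M[int]_k) : 'M[Rdefinitions.R]_k :=
  map_mx (fun z : int => z%:~R) C.

Lemma det_toR k (C : 'M[int]_k) : \det (toR C) = (\det C)%:~R.
Proof. by rewrite /toR det_map_mx. Qed.

Lemma pd_toR k (C : 'M[int]_k) : posdef_int C <-> pd (toR C).
Proof. by []. Qed.

Lemma G_sym n p (M : 'M[int]_p.+1) k : M^T = M -> (G n M k)^T = G n M k.
Proof. by move=> hs; apply/matrixP => i j; rewrite !mxE Gf_sym. Qed.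

Lemma step n p (M : 'M[int]_p.+1) k : M^T = M -> (3 < n)%N -> (p <= k)%N ->
  posdef_int (G n M k.+1) /\ 0 < \det (tilde (G n M k.+1)) ->
  posdef_int (G n M k.+2) /\ 0 < \det (tilde (G n M k.+2)).
Proof.
move=> hs hn pk [hpd hdt].
have n3 : 0 < n%:Z - 3 by rewrite subr_gt0 (ltz_nat 3 n).
have dG : 0 < \det (G n M k.+1).
  rewrite -(ltr0z Rdefinitions.R) -det_toR; apply: pd_det => //.
  by rewrite /toR map_trmx G_sym.
have dt : 0 < \det (tilde (G n M k.+2)) by rewrite det_tG_step // mulr_gt0.
split => //; apply/pd_toR; apply: pd_of_lead.
- by rewrite /toR map_trmx G_sym.
- by rewrite /toR /lead -map_col' -map_row' -/(lead _) lead_G.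
- rewrite det_toR ltr0z det_G_tG; apply: addr_gt0 => //; exact: mulr_gt0.
Qed.

Unset Implicit Arguments.
Theorem theorem6 (n r m : nat) (Hn4 : (n %% 4 = 3)%N) (Hn3 : (3 < n)%N)
    (Hr : (1 <= r)%N) (Hrm : (r <= m)%N) (M : 'M[int]_r)
    (HM : in_frakC n M) (Hdet : 0 < \det (tilde M)) :
  exists E : 'M[int]_m, in_frakE n Hrm M E /\ 0 < \det (tilde E).
Proof.
case: r Hr Hrm M HM Hdet => [//|p] _ Hrm M [hs hpd hd hm] Hdet.
have GM : G n M p.+1 = M.
  by apply/matrixP => i j; rewrite GE Gf_lo // !inord_val.
have key k : (p.+1 <= k)%N -> posdef_int (G n M k) /\ 0 < \det (tilde (G n M k)).
  elim: k => [//|k IH] hk.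
  have [hk'|hk'] := boolP (k.+1 == p.+1).
    by move/eqP: hk' => [->]; rewrite GM.
  case: k IH hk hk' => [|k] IH hk hk'; first by lia.
  apply: step => //; first by lia.
  apply: IH; lia.
have [kpd kdt] := key m Hrm.
exists (G n M m); split => //; split.
  split => //.
  - exact: G_sym.
  - by move=> i; rewrite GE Gf_diag.
  - by move=> i j; rewrite GE Gf_mod.
by move=> i j; rewrite GE /= Gf_lo // !inord_val.
Qed.
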